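(* Let $K$ be an infinite field, let $n\geq 1$, and let $f(x_1,\dots,x_n)=\sum_{\sigma\in S_n}\alpha_\sigma x_{\sigma(1)}\cdots x_{\sigma(n)}$, with $\alpha_\sigma\in K$, be a multilinear polynomial of degree $n$ in noncommuting variables. Let $UT_3=UT_3(K)$ be the algebra of $3\times 3$ upper triangular matrices over $K$, and let $\mathrm{Im}(f)=\{f(a_1,\dots,a_n): a_1,\dots,a_n\in UT_3\}$. Then $\mathrm{Im}(f)$ is equal to one of the following four sets: $UT_3$, $J$, $J^2$, or $\{0\}$.
   Context: $J=J(UT_3)$ denotes the Jacobson radical of $UT_3$, i.e., the set of strictly upper triangular $3\times 3$ matrices over $K$ (matrices whose entries $(i,j)$ are zero whenever $i\geq j$). $J^2$ is the square of $J$, i.e., the set of $3\times 3$ matrices over $K$ whose only possibly nonzero entry is the $(1,3)$ entry. *)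

(* Defs.v *)
From mathcomp Require Import all_boot all_order all_algebra all_fingroup.
Set Implicit Arguments. Unset Strict Implicit. Unset Printing Implicit Defensive.
Import GRing.Theory.
Local Open Scope ring_scope.

Definition infinite_field (K : fieldType) : Prop :=
  forall s : seq K, exists x : K, x \notin s.

Definition UT3 (K : fieldType) (A : 'M[K]_3) : Prop :=
  forall i j : 'I_3, (j < i)%N -> A i j = 0.

Definition J3 (K : fieldType) (A : 'M[K]_3) : Prop :=
  forall i j : 'I_3, (j <= i)%N -> A i j = 0.

(* J^2: only the (1,3) entry (0-based (0,2)) may be nonzero. *)
Definition J3sq (K : fieldType) (A : 'M[K]_3) : Prop :=
  forall i j : 'I_3, ~ (val i = 0%N /\ val j = 2%N) -> A i j = 0.

Definition zero_set (K : fieldType) (A : 'M[K]_3) : Prop := A = 0.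

Definition eval_multilin (K : fieldType) (n : nat) (alpha : 'S_n -> K)
  (a : 'I_n -> 'M[K]_3) : 'M[K]_3 :=
  \sum_(s : 'S_n) alpha s *: \prod_(i < n) a (s i).

Definition image_UT3 (K : fieldType) (n : nat) (alpha : 'S_n -> K)
  (M : 'M[K]_3) : Prop :=
  exists a : 'I_n -> 'M[K]_3, (forall i, UT3 (a i)) /\ M = eval_multilin alpha a.

Definition set_eq (K : fieldType) (P Q : 'M[K]_3 -> Prop) : Prop :=
  forall M, P M <-> Q M.

(* Main.v *)
Require Import Defs.
From mathcomp Require Import all_boot all_order all_algebra all_fingroup.
From mathcomp Require Import ring.
From Stdlib Require Import Classical.
Set Implicit Arguments. Unset Strict Implicit. Unset Printing Implicit Defensive.
Import GRing.Theory.
Local Open Scope ring_scope.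

Section M3.
Variable R : comRingType.

Definition m9 (a00 a01 a02 a10 a11 a12 a20 a21 a22 : R) : 'M[R]_3 :=
  \matrix_(i, j) nth 0 (nth [::] [:: [:: a00; a01; a02]; [:: a10; a11; a12];
                                      [:: a20; a21; a22]] i) j.

Definition i0 : 'I_3 := @Ordinal 3 0 isT.
Definition i1 : 'I_3 := @Ordinal 3 1 isT.
Definition i2 : 'I_3 := @Ordinal 3 2 isT.

Lemma ord3P (i : 'I_3) : i = i0 \/ i = i1 \/ i = i2.
Proof.
case: i => [[|[|[|k]]] Hk].
- by left; apply: val_inj.
- by right; left; apply: val_inj.
- by right; right; apply: val_inj.
- by [].
Qed.

Ltac ord3 i := case: (ord3P i) => ->.

Lemma m9_eta (A : 'M[R]_3) : A = m9 (A i0 i0) (A i0 i1) (A i0 i2)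
  (A i1 i0) (A i1 i1) (A i1 i2) (A i2 i0) (A i2 i1) (A i2 i2).
Proof.
apply/matrixP => i j; rewrite mxE.
by case: (ord3P i) => [->|[->|->]]; case: (ord3P j) => [->|[->|->]].
Qed.

Lemma m9M a00 a01 a02 a10 a11 a12 a20 a21 a22 b00 b01 b02 b10 b11 b12 b20 b21 b22 :
  m9 a00 a01 a02 a10 a11 a12 a20 a21 a22 *m m9 b00 b01 b02 b10 b11 b12 b20 b21 b22 =
  m9 (a00*b00 + a01*b10 + a02*b20) (a00*b01 + a01*b11 + a02*b21) (a00*b02 + a01*b12 + a02*b22)
     (a10*b00 + a11*b10 + a12*b20) (a10*b01 + a11*b11 + a12*b21) (a10*b02 + a11*b12 + a12*b22)
     (a20*b00 + a21*b10 + a22*b20) (a20*b01 + a21*b11 + a22*b21) (a20*b02 + a21*b12 + a22*b22).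
Proof.
apply/matrixP => i j; rewrite !mxE !big_ord_recl big_ord0 !mxE /=.
case: (ord3P i) => [->|[->|->]]; case: (ord3P j) => [->|[->|->]] /=; rewrite addr0 addrA //.
Qed.

Lemma m9D a00 a01 a02 a10 a11 a12 a20 a21 a22 b00 b01 b02 b10 b11 b12 b20 b21 b22 :
  m9 a00 a01 a02 a10 a11 a12 a20 a21 a22 + m9 b00 b01 b02 b10 b11 b12 b20 b21 b22 =
  m9 (a00+b00) (a01+b01) (a02+b02) (a10+b10) (a11+b11) (a12+b12) (a20+b20) (a21+b21) (a22+b22).
Proof.
apply/matrixP => i j; rewrite !mxE.
by case: (ord3P i) => [->|[->|->]]; case: (ord3P j) => [->|[->|->]].
Qed.

Lemma m9Z c a00 a01 a02 a10 a11 a12 a20 a21 a22 :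
  c *: m9 a00 a01 a02 a10 a11 a12 a20 a21 a22 =
  m9 (c*a00) (c*a01) (c*a02) (c*a10) (c*a11) (c*a12) (c*a20) (c*a21) (c*a22).
Proof.
apply/matrixP => i j; rewrite !mxE.
by case: (ord3P i) => [->|[->|->]]; case: (ord3P j) => [->|[->|->]].
Qed.

Lemma m9_1 : (1 : 'M[R]_3) = m9 1 0 0 0 1 0 0 0 1.
Proof.
apply/matrixP => i j; rewrite !mxE.
by case: (ord3P i) => [->|[->|->]]; case: (ord3P j) => [->|[->|->]].
Qed.

Lemma m9_0 : (0 : 'M[R]_3) = m9 0 0 0 0 0 0 0 0 0.
Proof.
apply/matrixP => i j; rewrite !mxE.
by case: (ord3P i) => [->|[->|->]]; case: (ord3P j) => [->|[->|->]].
Qed.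


Definition mk (a b c d e f : R) := m9 a b c 0 d e 0 0 f.

Lemma mkM a b c d e f a' b' c' d' e' f' :
  mk a b c d e f *m mk a' b' c' d' e' f' =
  mk (a*a') (a*b' + b*d') (a*c' + b*e' + c*f') (d*d') (d*e' + e*f') (f*f').
Proof. rewrite /mk m9M; congr m9; ring. Qed.

End M3.

Ltac ord3 i := case: (ord3P i) => [->|[->|->]].

Section UT.
Variable K : fieldType.
Implicit Types A B : 'M[K]_3.

Lemma UT3_mk A : UT3 A ->
  A = mk (A i0 i0) (A i0 i1) (A i0 i2) (A i1 i1) (A i1 i2) (A i2 i2).
Proof.
move=> H; rewrite {1}(m9_eta A) /mk (H i1 i0) // (H i2 i0) // (H i2 i1) //.
Qed.

Lemma mk_UT3 (a b c d e f : K) : UT3 (mk a b c d e f).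
Proof.
move=> i j; rewrite mxE; ord3 i; ord3 j => //.
Qed.

Lemma UT3M A B : UT3 A -> UT3 B -> UT3 (A *m B).
Proof. by move=> /UT3_mk -> /UT3_mk ->; rewrite mkM; apply: mk_UT3. Qed.

Lemma UT3_1 : UT3 (1 : 'M[K]_3).
Proof. rewrite m9_1; exact: mk_UT3. Qed.

Lemma UT3_0 : UT3 (0 : 'M[K]_3).
Proof. rewrite m9_0; exact: (mk_UT3 0 0 0 0 0 0). Qed.

Lemma UT3D A B : UT3 A -> UT3 B -> UT3 (A + B).
Proof. by move=> HA HB i j Hij; rewrite mxE HA // HB // addr0. Qed.

Lemma UT3Z c A : UT3 A -> UT3 (c *: A).
Proof. by move=> HA i j Hij; rewrite mxE HA // mulr0. Qed.

Lemma UT3_prod m (F : 'I_m -> 'M[K]_3) : (forall i, UT3 (F i)) ->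
  UT3 (\prod_(i < m) F i) /\ forall k, (\prod_(i < m) F i) k k = \prod_(i < m) F i k k.
Proof.
elim: m F => [|m IH] F HF.
  rewrite !big_ord0; split; first exact: UT3_1.
  by move=> k; rewrite big_ord0 m9_1 mxE; case: (ord3P k) => [->|[->|->]].
rewrite !big_ord_recl; have [H1 H2] := IH (fun i => F (lift ord0 i)) (fun i => HF _).
split; first by rewrite -mulmxE; apply: UT3M.
move=> k; rewrite big_ord_recl -H2 -mulmxE (UT3_mk (HF ord0)) (UT3_mk H1) mkM.
rewrite /mk !mxE; ord3 k => //=.
Qed.

Lemma eval_UT3 n (alpha : 'S_n -> K) a : (forall i, UT3 (a i)) -> UT3 (eval_multilin alpha a).
Proof.
move=> Ha; rewrite /eval_multilin.
apply: (big_ind (fun A => UT3 A)); [exact: UT3_0 | exact: UT3D |].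
move=> s _; apply: UT3Z; exact: (UT3_prod (fun i => Ha (s i))).1.
Qed.

Lemma prod_hom (P Q : 'M[K]_3)
  (hm : forall A B, UT3 A -> UT3 B -> P *m (A *m B) *m Q = (P *m A *m Q) *m (P *m B *m Q))
  m (F : 'I_m.+1 -> 'M[K]_3) : (forall i, UT3 (F i)) ->
  \prod_(i < m.+1) (P *m F i *m Q) = P *m (\prod_(i < m.+1) F i) *m Q.
Proof.
elim: m F => [|m IH] F HF; first by rewrite !big_ord1.
rewrite big_ord_recl IH; last by move=> i; apply: HF.
rewrite [in RHS]big_ord_recl -!mulmxE hm //.
exact: (UT3_prod (fun i => HF (lift ord0 i))).1.
Qed.

Lemma image_hom n (hn : (1 <= n)%N) (alpha : 'S_n -> K) (P Q : 'M[K]_3)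
  (hm : forall A B, UT3 A -> UT3 B -> P *m (A *m B) *m Q = (P *m A *m Q) *m (P *m B *m Q))
  (hu : forall A, UT3 A -> UT3 (P *m A *m Q)) M :
  image_UT3 alpha M -> image_UT3 alpha (P *m M *m Q).
Proof.
case=> a [Ha ->]; exists (fun i => P *m a i *m Q); split => [i|]; first exact: hu.
rewrite /eval_multilin mulmx_sumr mulmx_suml; apply: eq_bigr => s _.
rewrite -scalemxAr -scalemxAl; congr (_ *: _).
case: n hn alpha s a Ha => [//|m] _ alpha s a Ha.
by rewrite (prod_hom hm (F := fun i => a (s i)) (fun i => Ha (s i))).
Qed.

End UT.


Section Homs.
Variable K : fieldType.

Ltac hm_tac eff := move=> A B /UT3_mk -> /UT3_mk ->; rewrite mkM !eff mkM; congr mk; ring.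
Ltac hu_tac eff := move=> A /UT3_mk ->; rewrite eff; exact: mk_UT3.

Section D.
Variables mu nu : K.
Hypotheses (hmu : mu != 0) (hnu : nu != 0).
Definition DP : 'M[K]_3 := m9 (mu*nu) 0 0 0 nu 0 0 0 1.
Definition DQ : 'M[K]_3 := m9 (mu*nu)^-1 0 0 0 nu^-1 0 0 0 1.
Lemma D_eff (a b c d e f : K) : DP *m mk a b c d e f *m DQ = mk a (mu*b) (mu*nu*c) d (nu*e) f.
Proof. rewrite /DP /DQ /mk !m9M; congr m9; field; rewrite ?hmu ?hnu //. Qed.
Lemma D_hm A B : UT3 A -> UT3 B -> DP *m (A *m B) *m DQ = (DP *m A *m DQ) *m (DP *m B *m DQ).
Proof. revert A B; hm_tac D_eff. Qed.
Lemma D_hu A : UT3 A -> UT3 (DP *m A *m DQ).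
Proof. revert A; hu_tac D_eff. Qed.
End D.

Section U.
Variable t : K.
Definition UP : 'M[K]_3 := mk 1 t 0 1 0 1.
Definition UQ : 'M[K]_3 := mk 1 (-t) 0 1 0 1.
Lemma U_eff (a b c d e f : K) : UP *m mk a b c d e f *m UQ = mk a (b + t*(d-a)) (c + t*e) d e f.
Proof. rewrite /UP /UQ !mkM; congr mk; ring. Qed.
Lemma U_hm A B : UT3 A -> UT3 B -> UP *m (A *m B) *m UQ = (UP *m A *m UQ) *m (UP *m B *m UQ).
Proof. revert A B; hm_tac U_eff. Qed.
Lemma U_hu A : UT3 A -> UT3 (UP *m A *m UQ).
Proof. revert A; hu_tac U_eff. Qed.

Definition VP : 'M[K]_3 := mk 1 0 0 1 t 1.
Definition VQ : 'M[K]_3 := mk 1 0 0 1 (-t) 1.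
Lemma V_eff (a b c d e f : K) : VP *m mk a b c d e f *m VQ = mk a b (c - t*b) d (e + t*(f-d)) f.
Proof. rewrite /VP /VQ !mkM; congr mk; ring. Qed.
Lemma V_hm A B : UT3 A -> UT3 B -> VP *m (A *m B) *m VQ = (VP *m A *m VQ) *m (VP *m B *m VQ).
Proof. revert A B; hm_tac V_eff. Qed.
Lemma V_hu A : UT3 A -> UT3 (VP *m A *m VQ).
Proof. revert A; hu_tac V_eff. Qed.
End U.

Definition C1P : 'M[K]_3 := m9 0 0 0 1 0 0 0 1 0.
Definition C1Q : 'M[K]_3 := m9 0 1 0 0 0 1 0 0 0.
Lemma C1_eff (a b c d e f : K) : C1P *m mk a b c d e f *m C1Q = mk 0 0 0 a b d.
Proof. rewrite /C1P /C1Q /mk !m9M; congr m9; ring. Qed.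
Lemma C1_hm A B : UT3 A -> UT3 B -> C1P *m (A *m B) *m C1Q = (C1P *m A *m C1Q) *m (C1P *m B *m C1Q).
Proof. revert A B; hm_tac C1_eff. Qed.
Lemma C1_hu A : UT3 A -> UT3 (C1P *m A *m C1Q).
Proof. revert A; hu_tac C1_eff. Qed.

Definition C2P : 'M[K]_3 := m9 0 1 0 0 0 1 0 0 0.
Definition C2Q : 'M[K]_3 := m9 0 0 0 1 0 0 0 1 0.
Lemma C2_eff (a b c d e f : K) : C2P *m mk a b c d e f *m C2Q = mk d e 0 f 0 0.
Proof. rewrite /C2P /C2Q /mk !m9M; congr m9; ring. Qed.
Lemma C2_hm A B : UT3 A -> UT3 B -> C2P *m (A *m B) *m C2Q = (C2P *m A *m C2Q) *m (C2P *m B *m C2Q).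
Proof. revert A B; hm_tac C2_eff. Qed.
Lemma C2_hu A : UT3 A -> UT3 (C2P *m A *m C2Q).
Proof. revert A; hu_tac C2_eff. Qed.

Definition C3P : 'M[K]_3 := m9 1 0 0 0 0 0 0 1 0.
Definition C3Q : 'M[K]_3 := m9 1 0 0 0 0 1 0 0 0.
Lemma C3_eff (a b c d e f : K) : C3P *m mk a b c d e f *m C3Q = mk a 0 b 0 0 d.
Proof. rewrite /C3P /C3Q /mk !m9M; congr m9; ring. Qed.
Lemma C3_hm A B : UT3 A -> UT3 B -> C3P *m (A *m B) *m C3Q = (C3P *m A *m C3Q) *m (C3P *m B *m C3Q).
Proof. revert A B; hm_tac C3_eff. Qed.
Lemma C3_hu A : UT3 A -> UT3 (C3P *m A *m C3Q).
Proof. revert A; hu_tac C3_eff. Qed.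

Definition EP : 'M[K]_3 := m9 1 0 0 0 1 0 0 0 0.
Lemma E_eff (a b c d e f : K) : EP *m mk a b c d e f *m EP = mk a b 0 d 0 0.
Proof. rewrite /EP /mk !m9M; congr m9; ring. Qed.
Lemma E_hm A B : UT3 A -> UT3 B -> EP *m (A *m B) *m EP = (EP *m A *m EP) *m (EP *m B *m EP).
Proof. revert A B; hm_tac E_eff. Qed.
Lemma E_hu A : UT3 A -> UT3 (EP *m A *m EP).
Proof. revert A; hu_tac E_eff. Qed.

End Homs.


Section Poly.
Variable K : fieldType.

Definition evR n (al : 'S_n -> {poly K}) (a : 'I_n -> 'M[{poly K}]_3) : 'M[{poly K}]_3 :=
  \sum_(s : 'S_n) al s *: \prod_(i < n) a (s i).

Lemma map_prod (x : K) m (F : 'I_m -> 'M[{poly K}]_3) :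
  map_mx (horner_eval x) (\prod_(i < m) F i) = \prod_(i < m) map_mx (horner_eval x) (F i).
Proof.
elim: m F => [|m IH] F; first by rewrite !big_ord0; apply: map_mx1.
by rewrite !big_ord_recl -!mulmxE map_mxM IH.
Qed.

Lemma map_ev (x : K) n (alpha : 'S_n -> K) (B : 'I_n -> 'M[{poly K}]_3) :
  map_mx (horner_eval x) (evR (fun s => (alpha s)%:P) B) =
  eval_multilin alpha (fun i => map_mx (horner_eval x) (B i)).
Proof.
rewrite /evR /eval_multilin map_mx_sum; apply: eq_bigr => s _.
by rewrite map_mxZ map_prod /= horner_evalE hornerC.
Qed.

Lemma map_mk (x : K) (a b c d e f : {poly K}) :
  map_mx (horner_eval x) (mk a b c d e f) = mk a.[x] b.[x] c.[x] d.[x] e.[x] f.[x].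
Proof.
apply/matrixP => i j; rewrite !mxE horner_evalE.
by case: (ord3P i) => [->|[->|->]]; case: (ord3P j) => [->|[->|->]] //=; rewrite horner0.
Qed.

Lemma inf_uniq (hK : infinite_field K) k : exists s : seq K, uniq s /\ size s = k.
Proof.
elim: k => [|k [s [us ss]]]; first by exists [::].
have [x hx] := hK s; exists (x :: s); by rewrite /= hx us ss.
Qed.

Lemma poly_nonroot (hK : infinite_field K) (p : {poly K}) : p != 0 -> exists x, p.[x] != 0.
Proof.
move=> hp; have [s [us ss]] := inf_uniq hK (size p).
case: (boolP (all (root p) s)) => [hall|].
  by have := max_poly_roots hp hall us; rewrite ss ltnn.
by case/allPn => x _ hx; exists x.
Qed.

End Poly.


Lemma prod_hom_n (K : fieldType) (P Q : 'M[K]_3)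
  (hm : forall A B, UT3 A -> UT3 B -> P *m (A *m B) *m Q = (P *m A *m Q) *m (P *m B *m Q))
  m (hm1 : (1 <= m)%N) (F : 'I_m -> 'M[K]_3) : (forall i, UT3 (F i)) ->
  \prod_(i < m) (P *m F i *m Q) = P *m (\prod_(i < m) F i) *m Q.
Proof. case: m hm1 F => [//|m] _ F HF; exact: prod_hom. Qed.

Lemma prod_0_n (K : fieldType) m (hm1 : (1 <= m)%N) :
  \prod_(i < m) (0 : 'M[K]_3) = 0.
Proof. case: m hm1 => [//|m] _; by rewrite big_ord_recl mul0r. Qed.

Section Main.
Variable K : fieldType.
Variable n : nat.
Hypothesis hn : (1 <= n)%N.
Variable alpha : 'S_n -> K.
Notation f := (eval_multilin alpha).
Notation im := (image_UT3 alpha).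

Lemma eval_hom (P Q : 'M[K]_3)
  (hm : forall A B, UT3 A -> UT3 B -> P *m (A *m B) *m Q = (P *m A *m Q) *m (P *m B *m Q))
  a : (forall i, UT3 (a i)) -> f (fun i => P *m a i *m Q) = P *m f a *m Q.
Proof.
move=> Ha; rewrite /eval_multilin mulmx_sumr mulmx_suml; apply: eq_bigr => s _.
rewrite -scalemxAr -scalemxAl; congr (_ *: _).
by rewrite (prod_hom_n hm hn (F := fun i => a (s i)) (fun i => Ha (s i))).
Qed.

Lemma eval_ext a b : a =1 b -> f a = f b.
Proof. by move=> e; rewrite /eval_multilin; apply: eq_bigr => s _; under eq_bigr do rewrite e. Qed.

Lemma im0 : im 0.
Proof.
exists (fun _ => 0); split => [i|]; first exact: UT3_0.
rewrite /eval_multilin big1 // => s _.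
by rewrite prod_0_n // scaler0.
Qed.

Lemma imD mu nu (a b c d e g : K) : mu != 0 -> nu != 0 -> im (mk a b c d e g) ->
  im (mk a (mu*b) (mu*nu*c) d (nu*e) g).
Proof. by move=> h1 h2 H; rewrite -D_eff //; apply: image_hom => //; [apply: D_hm | apply: D_hu]. Qed.
Lemma imU t (a b c d e g : K) : im (mk a b c d e g) -> im (mk a (b + t*(d-a)) (c + t*e) d e g).
Proof. by move=> H; rewrite -U_eff; apply: image_hom => //; [apply: U_hm | apply: U_hu]. Qed.
Lemma imV t (a b c d e g : K) : im (mk a b c d e g) -> im (mk a b (c - t*b) d (e + t*(g-d)) g).
Proof. by move=> H; rewrite -V_eff; apply: image_hom => //; [apply: V_hm | apply: V_hu]. Qed.
Lemma imC1 (a b c d e g : K) : im (mk a b c d e g) -> im (mk 0 0 0 a b d).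
Proof. by move=> H; rewrite -(C1_eff a b c d e g); apply: image_hom => //; [apply: C1_hm | apply: C1_hu]. Qed.
Lemma imC2 (a b c d e g : K) : im (mk a b c d e g) -> im (mk d e 0 g 0 0).
Proof. by move=> H; rewrite -(C2_eff a b c d e g); apply: image_hom => //; [apply: C2_hm | apply: C2_hu]. Qed.
Lemma imC3 (a b c d e g : K) : im (mk a b c d e g) -> im (mk a 0 b 0 0 d).
Proof. by move=> H; rewrite -(C3_eff a b c d e g); apply: image_hom => //; [apply: C3_hm | apply: C3_hu]. Qed.
Lemma imE (a b c d e g : K) : im (mk a b c d e g) -> im (mk a b 0 d 0 0).
Proof. by move=> H; rewrite -(E_eff a b c d e g); apply: image_hom => //; [apply: E_hm | apply: E_hu]. Qed.

Lemma im_UT3 M : im M -> UT3 M.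
Proof. by case=> a [Ha ->]; apply: eval_UT3. Qed.

Lemma im_mk M : im M -> M = mk (M i0 i0) (M i0 i1) (M i0 i2) (M i1 i1) (M i1 i2) (M i2 i2).
Proof. by move/im_UT3/UT3_mk. Qed.

Lemma mkE (a b c d e g : K) :
  (mk a b c d e g i0 i0 = a) * (mk a b c d e g i0 i1 = b) * (mk a b c d e g i0 i2 = c) *
  (mk a b c d e g i1 i1 = d) * (mk a b c d e g i1 i2 = e) * (mk a b c d e g i2 i2 = g).
Proof. by rewrite !mxE. Qed.

End Main.


Lemma entry01_E (K : fieldType) (X : 'M[K]_3) : UT3 X -> X i0 i1 = (EP K *m X *m EP K) i0 i1.
Proof. by move=> HX; rewrite (UT3_mk HX) E_eff !mxE. Qed.
Lemma entry12_C2 (K : fieldType) (X : 'M[K]_3) : UT3 X -> X i1 i2 = (C2P K *m X *m C2Q K) i0 i1.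
Proof. by move=> HX; rewrite (UT3_mk HX) C2_eff !mxE. Qed.

Section Main2.
Variable K : fieldType.
Hypothesis hK : infinite_field K.
Variable n : nat.
Hypothesis hn : (1 <= n)%N.
Variable alpha : 'S_n -> K.
Notation f := (eval_multilin alpha).
Notation im := (image_UT3 alpha).

Lemma diag_eval a : (forall i, UT3 (a i)) -> forall k,
  f a k k = (\sum_s alpha s) * \prod_(i < n) a i k k.
Proof.
move=> Ha k; rewrite /eval_multilin summxE mulr_suml; apply: eq_bigr => s _.
rewrite mxE (UT3_prod (fun i => Ha (s i))).2; congr (_ * _).
by rewrite [RHS](reindex_inj (@perm_inj _ s)).
Qed.

Lemma C11 a : (forall i, UT3 (a i)) -> f a i0 i1 != 0 ->
  exists M, im M /\ M i0 i1 != 0 /\ M i1 i2 != 0.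
Proof.
move=> Ha h.
pose p k := a k i0 i0; pose q k := a k i0 i1; pose r k := a k i1 i1.
pose B := fun k => mk (p k)%:P (q k)%:P 0 ((r k)%:P + 'X * (p k - r k)%:P) (q k)%:P (r k)%:P.
pose G := evR (fun s => (alpha s)%:P) B.
have hx : forall x, f (fun k => mk (p k) (q k) 0 (r k + x * (p k - r k)) (q k) (r k))
    = map_mx (horner_eval x) G.
  move=> x; rewrite /G map_ev; apply: eval_ext => k; rewrite /B map_mk !hornerE //.
have hUx : forall x k, UT3 (mk (p k) (q k) 0 (r k + x * (p k - r k)) (q k) (r k)).
  by move=> x k; apply: mk_UT3.
have hbase : f a i0 i1 = f (fun k => mk (p k) (q k) 0 (r k) 0 0) i0 i1.
  rewrite (entry01_E (eval_UT3 alpha Ha)) -eval_hom //; last exact: E_hm.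
  by apply: (congr1 (fun M : 'M[K]_3 => M i0 i1)); apply: eval_ext => k; rewrite (UT3_mk (Ha k)) E_eff.
have e0 : (G i0 i1).[0] = f a i0 i1.
  have ee : (map_mx (horner_eval 0) G) i0 i1 = (G i0 i1).[0] by rewrite mxE horner_evalE.
  rewrite -ee -hx.
  rewrite (entry01_E (eval_UT3 alpha (hUx 0))) -eval_hom //; last exact: E_hm.
  by rewrite hbase; apply: (congr1 (fun M : 'M[K]_3 => M i0 i1)); apply: eval_ext => k; rewrite E_eff mul0r addr0.
have e1 : (G i1 i2).[1] = f a i0 i1.
  have ee : (map_mx (horner_eval 1) G) i1 i2 = (G i1 i2).[1] by rewrite mxE horner_evalE.
  rewrite -ee -hx.
  rewrite (entry12_C2 (eval_UT3 alpha (hUx 1))) -eval_hom //; last exact: C2_hm.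
  rewrite hbase; apply: (congr1 (fun M : 'M[K]_3 => M i0 i1)); apply: eval_ext => k; rewrite C2_eff; congr mk; ring.
have nz0 : G i0 i1 != 0 by apply/eqP => h0; move: e0; rewrite h0 horner0 => e; rewrite -e eqxx in h.
have nz1 : G i1 i2 != 0 by apply/eqP => h0; move: e1; rewrite h0 horner0 => e; rewrite -e eqxx in h.
have [x hxz] := poly_nonroot hK (mulf_neq0 nz0 nz1).
move: hxz; rewrite hornerM mulf_eq0 negb_or => /andP [h1 h2].
exists (map_mx (horner_eval x) G); split.
  by rewrite -hx; eexists; split; last reflexivity; apply: hUx.
by rewrite !mxE !horner_evalE.
Qed.

End Main2.


Lemma J3sq_mk (K : fieldType) (z : K) : J3sq (mk 0 0 z 0 0 0).
Proof.
move=> i j h; rewrite mxE.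
case: (ord3P i) h => [->|[->|->]]; case: (ord3P j) => [->|[->|->]] //= h.
by exfalso; apply: h.
Qed.

Lemma J3sq_eq (K : fieldType) (X : 'M[K]_3) : J3sq X -> X = mk 0 0 (X i0 i2) 0 0 0.
Proof.
move=> H; apply/matrixP => i j; rewrite mxE.
case: (ord3P i) (H i) => [->|[->|->]] Hi; case: (ord3P j) (Hi j) => [->|[->|->]] Hj //=;
  by apply: Hj; case.
Qed.

Lemma J3_UT3 (K : fieldType) (X : 'M[K]_3) : J3 X -> UT3 X.
Proof. by move=> H i j hij; apply: H; apply: ltnW. Qed.

Lemma J3_eq (K : fieldType) (X : 'M[K]_3) : J3 X -> X = mk 0 (X i0 i1) (X i0 i2) 0 (X i1 i2) 0.
Proof.
move=> H; rewrite {1}(UT3_mk (J3_UT3 H)).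
by rewrite (H i0 i0) // (H i1 i1) // (H i2 i2).
Qed.

Lemma J3_mk (K : fieldType) (x y z : K) : J3 (mk 0 x z 0 y 0).
Proof.
move=> i j h; rewrite mxE.
by case: (ord3P i) h => [->|[->|->]]; case: (ord3P j) => [->|[->|->]].
Qed.

Unset Implicit Arguments.

Theorem mainTheorem1 (K : fieldType) (hK : infinite_field K) (n : nat)
  (hn : (1 <= n)%N) (alpha : 'S_n -> K) :
  set_eq (image_UT3 alpha) (@UT3 K) \/
  set_eq (image_UT3 alpha) (@J3 K) \/
  set_eq (image_UT3 alpha) (@J3sq K) \/
  set_eq (image_UT3 alpha) (@zero_set K).
Proof.
have im_eq : forall A B, image_UT3 alpha A -> A = B -> image_UT3 alpha B by move=> A B H <-.
set S := \sum_s alpha s.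
case: (eqVneq S 0) => hS; last first.
  left => M; split; first exact: im_UT3.
  move=> HM; pose j0 : 'I_n := Ordinal hn.
  exists (fun i => if i == j0 then S^-1 *: M else 1); split.
    by move=> i; case: (i == j0); [apply: UT3Z | apply: UT3_1].
  rewrite /eval_multilin.
  have H : forall s : 'S_n, \prod_(i < n) (if s i == j0 then S^-1 *: M else 1) = S^-1 *: M.
    move=> s.
    rewrite (eq_bigr (fun i => if i == (s^-1)%g j0 then S^-1 *: M else 1)); last first.
      move=> i _; congr (if _ then _ else _).
      apply/eqP/eqP => [<-|->]; by rewrite ?permK ?permKV.
    by rewrite -big_mkcond big_pred1_eq.
  rewrite (eq_bigr (fun s => alpha s *: (S^-1 *: M))); last by move=> s _ /=; rewrite H.
  by rewrite -scaler_suml scalerA -/S mulfV // scale1r.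
right.
have imJ : forall M, image_UT3 alpha M -> J3 M.
  move=> M [a [Ha ->]] i j; rewrite leq_eqVlt => /orP [/eqP e|lt].
    have -> : j = i by apply: val_inj.
    by rewrite diag_eval // -/S hS mul0r.
  exact: (eval_UT3 alpha Ha) i j lt.
case: (classic (exists M, image_UT3 alpha M /\ ~ J3sq M)).
  move=> [M [HM HnM]]; left => T; split; first exact: imJ.
  have Mdef := J3_eq (imJ _ HM).
  have [c [hc HN]] : exists c, c != 0 /\ image_UT3 alpha (mk 0 c 0 0 0 0).
    case: (eqVneq (M i0 i1) 0) => hx.
      case: (eqVneq (M i1 i2) 0) => hy.
        by exfalso; apply: HnM; rewrite {1}Mdef hx hy; apply: J3sq_mk.
      exists (M i1 i2); split => //.
      by move: HM; rewrite {1}Mdef => /(imC2 hn).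
    exists (M i0 i1); split => //.
    by move: HM; rewrite {1}Mdef => /(imE hn).
  move=> /J3_eq ->.
  set x := T i0 i1; set y := T i1 i2; set z := T i0 i2.
  case: (eqVneq x 0) => hx; case: (eqVneq y 0) => hy.
  - case: (eqVneq z 0) => hz.
      apply: (im_eq _ _ (im0 hn alpha)); rewrite hx hy hz m9_0 //.
    have h1 : z / c != 0 by rewrite mulf_neq0 ?invr_eq0.
    apply: (im_eq _ _ (imD hn (oner_neq0 K) h1 (imC3 hn HN))).
    by rewrite hx hy; congr mk; field.
  - have h1 : y / c != 0 by rewrite mulf_neq0 ?invr_eq0.
    apply: (im_eq _ _ (imU hn (z / y) (imD hn (oner_neq0 K) h1 (imC1 hn HN)))).
    by rewrite hx; congr mk; field; rewrite ?hy ?hc.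
  - have h1 : x / c != 0 by rewrite mulf_neq0 ?invr_eq0.
    apply: (im_eq _ _ (imV hn (- z / x) (imD hn h1 (oner_neq0 K) (imE hn HN)))).
    by rewrite hy; congr mk; field; rewrite ?hx ?hc.
  - have [a [Ha Hfa]] := HN.
    have ha : eval_multilin alpha a i0 i1 != 0 by rewrite -Hfa mxE.
    have [M' [HM' [h1 h2]]] := C11 hK hn Ha ha.
    have Mq := J3_eq (imJ _ HM'); rewrite Mq in HM'.
    set x0 := M' i0 i1 in h1 HM'; set y0 := M' i1 i2 in h2 HM'; set z0 := M' i0 i2 in HM'.
    have hmu : x / x0 != 0 by rewrite mulf_neq0 ?invr_eq0.
    have hnu : y / y0 != 0 by rewrite mulf_neq0 ?invr_eq0.
    apply: (im_eq _ _ (imU hn ((z - x / x0 * (y / y0) * z0) / y) (imD hn hmu hnu HM'))).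
    by congr mk; field; rewrite ?hx ?hy ?h1 ?h2 ?hc ?hz.
move=> Hno.
have allsq : forall M, image_UT3 alpha M -> J3sq M.
  by move=> M HM; apply: NNPP => H; apply: Hno; exists M.
right.
case: (classic (exists M, image_UT3 alpha M /\ M != 0)).
  move=> [M0 [HM0 hM0]]; left => T; split; first exact: allsq.
  have M0def := J3sq_eq (allsq _ HM0).
  have hz0 : M0 i0 i2 != 0 by apply: contraNneq hM0 => e; rewrite M0def e /mk -m9_0.
  move: HM0; rewrite M0def => HM0.
  move=> /J3sq_eq ->; set z := T i0 i2.
  case: (eqVneq z 0) => hz.
    by apply: (im_eq _ _ (im0 hn alpha)); rewrite hz m9_0.
  have h1 : z / M0 i0 i2 != 0 by rewrite mulf_neq0 ?invr_eq0.
  apply: (im_eq _ _ (imD hn (oner_neq0 K) h1 HM0)).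
  by congr mk; field.
move=> Hno2; right => M; split.
  move=> HM; case: (eqVneq M 0) => // hne; exfalso; apply: Hno2; by exists M.
by rewrite /zero_set => ->; apply: im0.
Qed.
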